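(* Let $G$ be a finite group. The graph $\mathcal{P}^*(G)/\mathtt{O}$ is a tame quotient of $\mathcal{P}^*(G)$ if and only if, for all $x,y\in G\setminus\{1\}$, $x\mathtt{O}y$ implies $x=y$.
   Context: The power graph $\mathcal{P}(G)$ has vertex set $G$, distinct $x,y$ adjacent iff one is a positive integer power of the other; $\mathcal{P}^*(G)$ is its subgraph induced on $G\setminus\{1\}$. $x\mathtt{O}y$ ($x,y$ open twins) iff $x$ and $y$ have the same open neighbourhood (set of neighbours excluding the vertex itself). For a graph $\Gamma$ and equivalence $\sim$ on its vertices, $\Gamma/\sim$ has vertex set the classes, classes joined iff some representatives are joined; the quotient is tame if $[x]=[y]$ implies $x$ and $y$ are joined by a path in $\Gamma$. *)

(* Defs.v *)
From Stdlib Require Import Relations.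
From mathcomp Require Import all_boot all_fingroup.
Set Implicit Arguments. Unset Strict Implicit. Unset Printing Implicit Defensive.
Local Open Scope group_scope.

Section PowerGraph.
Variable gT : finGroupType.

Definition is_pow (x y : gT) : Prop := exists n : nat, (0 < n)%N /\ y = x ^+ n.

Definition power_adj (x y : gT) : Prop := x <> y /\ (is_pow x y \/ is_pow y x).

Definition pstar_adj (x y : gT) : Prop := x <> 1 /\ y <> 1 /\ power_adj x y.

Definition open_nbhd (x : gT) : gT -> Prop := fun z => pstar_adj x z.

(* x O y : same open neighbourhood in P*(G) *)
Definition open_twins (x y : gT) : Prop := forall z : gT, open_nbhd x z <-> open_nbhd y z.

Definition pstar_connected (x y : gT) : Prop := clos_refl_trans gT pstar_adj x y.

Definition pstar_O_tame : Prop :=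
  forall x y : gT, x <> 1 -> y <> 1 -> open_twins x y -> pstar_connected x y.
End PowerGraph.

(* Main.v *)
Require Import Defs.
From mathcomp Require Import all_boot all_fingroup.
From mathcomp Require Import cyclic.
From Stdlib Require Import Relations.
Local Open Scope group_scope.

Section Aux.
Variable gT : finGroupType.

Lemma twins_sym (x y : gT) : open_twins x y -> open_twins y x.
Proof. by move=> H z; split; apply H. Qed.

Lemma memA (x y : gT) : x <> 1 -> y <> 1 -> open_twins x y ->
  y \in <[x]> -> x = y.
Proof.
move=> x1 y1 tw /cycleP [i Hi].
case: (eqVneq x y) => [//|nxy].
have adj : pstar_adj x y.
  split; [done|split; [done|split; [by apply/eqP|left]]].
  exists i; split=> //; case: i Hi => [|i] Hi //.
have := (proj1 (tw y) adj) => -[_ [_ [H _]]].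
by case: H.
Qed.

Lemma memB (x y : gT) : x <> 1 -> y <> 1 -> open_twins x y ->
  (y \in <[x]>) || (x \in <[y]>) -> x = y.
Proof.
move=> x1 y1 tw /orP [H|H]; first exact: memA.
by symmetry; apply: memA => //; apply: twins_sym.
Qed.

Lemma pow_mem (x y : gT) : is_pow x y -> y \in <[x]>.
Proof. by move=> [n [_ ->]]; apply: mem_cycle. Qed.

Lemma adj_mem (x z : gT) : pstar_adj x z -> (z \in <[x]>) || (x \in <[z]>).
Proof. by move=> [_ [_ [_ [H|H]]]]; apply/orP; [left|right]; apply: pow_mem. Qed.

Lemma caseB (x y : gT) : x <> 1 -> y <> 1 -> open_twins x y ->
  x^-1 <> x -> x = y.
Proof.
move=> x1 y1 tw xi.
have adj : pstar_adj x x^-1.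
  split=> //; split.
    by move=> E; apply: x1; rewrite -(invgK x) E invg1.
  split; first by move=> E; apply: xi.
  left; exists #[x].-1; split; last exact: invg_expg.
  have : (#[x] != 1)%N by rewrite order_eq1; apply/eqP.
  have := order_gt0 x. case: #[x] => [|[|n]] //.
have /adj_mem := proj1 (tw _) adj.
rewrite cycleV groupV => H; apply: memB => //.
by rewrite orbC.
Qed.

Lemma ord2 (x : gT) : x <> 1 -> x^-1 = x -> #[x] = 2.
Proof.
move=> x1 xi.
have h2 : (#[x] %| 2)%N by rewrite order_dvdn expgS expg1 -{1}xi mulVg.
have : (#[x] != 1)%N by rewrite order_eq1; apply/eqP.
have := order_gt0 x.
have := dvdn_leq (isT : 0 < 2) h2.
case: #[x] => [|[|[|n]]] //.
Qed.

Lemma inv_case (x z : gT) : x <> 1 -> x^-1 = x -> pstar_adj x z -> x \in <[z]>.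
Proof.
move=> x1 xi [_ [z1 [nxz [[n [_ Hn]]|H]]]]; last exact: pow_mem.
have x2 : x ^+ 2 = 1 by rewrite expgS expg1 -{1}xi mulVg.
rewrite -(expg_mod n x2) in Hn.
have : (n %% 2 < 2)%N by rewrite ltn_mod.
case: (n %% 2) Hn => [|[|k]] Hn //.
by move=> _; exfalso; apply: nxz; rewrite Hn expg1.
Qed.

Lemma caseC (x y z : gT) : x <> 1 -> y <> 1 -> open_twins x y ->
  x^-1 = x -> y^-1 = y -> pstar_adj x z -> x = y.
Proof.
move=> x1 y1 tw xi yi adj.
have adjy := proj1 (tw z) adj.
have hx := inv_case x z x1 xi adj.
have hy := inv_case y z y1 yi adjy.
have E : <[x]> == <[y]> :> {set gT}.
  rewrite (eq_subG_cyclic (cycle_cyclic z)) ?cycle_subG //.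
  by rewrite -!orderE (ord2 x x1 xi) (ord2 y y1 yi).
apply: memB => //; apply/orP; left.
have -> : <[x]> = <[y]> by apply/eqP.
exact: cycle_id.
Qed.

Lemma key (x y z : gT) : x <> 1 -> y <> 1 -> open_twins x y ->
  pstar_adj x z -> x = y.
Proof.
move=> x1 y1 tw adj.
case: (eqVneq x^-1 x) => [xi|/eqP xi]; last exact: caseB.
case: (eqVneq y^-1 y) => [yi|/eqP yi].
  exact: (caseC x y z x1 y1 tw xi yi adj).
by symmetry; apply: caseB => //; apply: twins_sym.
Qed.

End Aux.

Theorem mainTheorem19 (gT : finGroupType) :
  pstar_O_tame gT <->
  (forall x y : gT, x <> 1 -> y <> 1 -> open_twins x y -> x = y).
Proof.
split.
  move=> T x y x1 y1 tw.
  have P := T x y x1 y1 tw.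
  apply clos_rt_rt1n in P.
  inversion P as [|w w2 st rest]; first by [].
  exact: (key gT x y w x1 y1 tw st).
move=> H x y x1 y1 tw; rewrite (H x y x1 y1 tw); apply: rt_refl.
Qed.
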